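(* Let $p$ be a rational prime with $p\equiv7\pmod{16}$, and let $a,b$ be positive integers with $p=(a+b\sqrt2)(a-b\sqrt2)$. Then there exists $\alpha\in\mathbb{Z}[\zeta_{16}+\zeta_{16}^7]$ such that $$a+b\sqrt2=\sigma_1(\alpha)\sigma_{15}(\alpha)=\sigma_7(\alpha)\sigma_9(\alpha),\qquad a-b\sqrt2=\sigma_3(\alpha)\sigma_{13}(\alpha)=\sigma_5(\alpha)\sigma_{11}(\alpha).$$
   Context: $\zeta_{16}=e^{2\pi i/16}$ and $\sqrt2=\zeta_{16}^2+\zeta_{16}^{14}$. For odd $i$, $\sigma_i$ is the automorphism of $\mathbb{Q}(\zeta_{16})$ with $\sigma_i(\zeta_{16})=\zeta_{16}^i$, applied to elements of the subring $\mathbb{Z}[\zeta_{16}+\zeta_{16}^7]$ (the ring of integers of the degree-4 subfield $\mathbb{Q}(\zeta_{16}+\zeta_{16}^7)$). *)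

(* Defs.v *)
From HB Require Import structures.
From mathcomp Require Import all_boot all_order all_algebra all_field.
Set Implicit Arguments. Unset Strict Implicit. Unset Printing Implicit Defensive.
Import Order.TTheory GRing.Theory Num.Theory.
Local Open Scope ring_scope.

(* zeta16 = e^{2 pi i/16}: in algC, n.-root z is the n-th root of z with
   minimal non-negative argument, so 8.-root (-1) = e^{i pi/8}. *)
Definition zeta16 : algC := 8.-root (-1).

Definition sqrt2 : algC := zeta16 ^+ 2 + zeta16 ^+ 14.

Definition theta16 : algC := zeta16 + zeta16 ^+ 7.

Definition in_Ztheta (x : algC) : Prop :=
  exists f : {poly int}, x = (map_poly (fun z : int => z%:~R) f).[theta16].

Definition is_sigma (i : nat) (u : {rmorphism algC -> algC}) : Prop :=
  u zeta16 = zeta16 ^+ i.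

(* Main.v *)
Require Import Defs.
From HB Require Import structures.
From mathcomp Require Import all_boot all_order all_algebra all_field.
From mathcomp Require Import zify ring lra.
Import Order.TTheory GRing.Theory Num.Theory.
Set Implicit Arguments. Unset Strict Implicit. Unset Printing Implicit Defensive.
Local Open Scope ring_scope.
From mathcomp Require Import cyclic.
Definition zs := (int * int)%type.
Definition zA (x y : zs) : zs := (x.1 + y.1, x.2 + y.2).
Definition zM (x y : zs) : zs := (x.1 * y.1 + 2 * (x.2 * y.2), x.1 * y.2 + x.2 * y.1).
Definition zC (x : zs) : zs := (x.1, - x.2).
Definition nrm (x : zs) : int := x.1 * x.1 - 2 * (x.2 * x.2).
Definition tp (x : zs) : Prop := 0 < x.1 /\ 2 * (x.2 * x.2) < x.1 * x.1.
Definition dl : zs := (2, -1).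
Definition zt := (zs * zs)%type.
Definition bil (e f : zt) : zs := zA (zM e.1 f.1) (zM dl (zM e.2 f.2)).
Definition sc (c : zs) (e : zt) : zt := (zM c e.1, zM c e.2).

Definition zN (x : zs) : zs := (- x.1, - x.2).
Definition ztsub (e f : zt) (k : zs) : zt := (zA e.1 (zN (zM k f.1)), zA e.2 (zN (zM k f.2))).
Definition Yd (A D : zs) := zM D (zM (zC A) (zC A)).

Ltac zs_ring := rewrite /bil /sc /ztsub /Yd /zA /zN /zM /zC /nrm /dl /=; try (congr (_, _)); ring.

Lemma sq0 (x : int) : 0 <= x * x.
Proof. by rewrite -expr2 sqr_ge0. Qed.

Lemma nrmM x y : nrm (zM x y) = nrm x * nrm y.
Proof. case: x y => [x0 x1] [y0 y1]; zs_ring. Qed.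

Lemma tp_nrm x : tp x -> 0 < nrm x.
Proof. case: x => [x0 x1] [/= h1 h2]; rewrite /nrm /=; lia. Qed.

Lemma sq_lt (P w : int) : 0 < P -> 4*(w*w) < P*P -> 0 < P + 2*w /\ 0 < P - 2*w.
Proof.
move=> h1 h2; split.
  case: (lerP 0 w) => hw; first lia.
  case: (lerP (P + 2*w) 0) => h3; last lia.
  have: 0 <= (- P - 2*w) * (P - 2*w) by apply: mulr_ge0; lia.
  lia.
case: (lerP w 0) => hw; first lia.
case: (lerP (P - 2*w) 0) => h3; last lia.
have: 0 <= (2*w - P) * (P + 2*w) by apply: mulr_ge0; lia.
lia.
Qed.

Lemma tpM x y : tp x -> tp y -> tp (zM x y).
Proof.
case: x y => [x0 x1] [y0 y1] [/= h1 h2] [/= h3 h4]; rewrite /tp /zM /=.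
have h5: 4 * ((x1*y1) * (x1 * y1)) < (x0*y0)*(x0*y0).
  have: 2 * (x1 * x1) * (2*(y1*y1)) <= 2 * (x1 * x1) * (y0*y0).
    apply: ler_wpM2l; nia.
  have hy: 0 < y0*y0 by nia.
  have: 2 * (x1 * x1) * (y0*y0) < x0*x0*(y0*y0) by rewrite ltr_pM2r.
  lia.
have [h6 _] := sq_lt (mulr_gt0 h1 h3) h5.
split; first by lia.
have e: (x0 * y0 + 2 * (x1 * y1)) * (x0 * y0 + 2 * (x1 * y1)) - 2 * ((x0 * y1 + x1 * y0) * (x0 * y1 + x1 * y0)) = (x0*x0 - 2*(x1*x1))*(y0*y0-2*(y1*y1)) by ring.
have: 0 < (x0*x0 - 2*(x1*x1))*(y0*y0-2*(y1*y1)) by apply: mulr_gt0; lia.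
lia.
Qed.

Lemma sq_le (P w : int) : 0 <= P -> 4*(w*w) <= P*P -> - P <= 2*w /\ 2*w <= P.
Proof.
move=> h1 h2; split.
  case: (lerP 0 w) => hw; first lia.
  case: (lerP (- P) (2*w)) => h3 //.
  have: 0 < (- P - 2*w) * (P - 2*w) by apply: mulr_gt0; lia.
  lia.
case: (lerP w 0) => hw; first lia.
case: (lerP (2*w) P) => h3 //.
have: 0 < (2*w - P) * (P + 2*w) by apply: mulr_gt0; lia.
lia.
Qed.

Lemma tpC x : tp x -> tp (zC x).
Proof. case: x => x0 x1 [/= h1 h2]; rewrite /tp /zC /=; lia. Qed.

Lemma tp_div a x : tp a -> tp (zM a x) -> tp x.
Proof.
move=> ha hax.
have h := tpM (tpC ha) hax.
have hn := tp_nrm ha.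
have e : zM (zC a) (zM a x) = (nrm a * x.1, nrm a * x.2).
  case: a x {ha hax h hn} => [a0 a1] [x0 x1]; zs_ring.
rewrite e in h; case: h => /= h1 h2.
case: x {e hax} h1 h2 => x0 x1 /= h1 h2; split => /=.
  by rewrite pmulr_rgt0 in h1.
have: nrm a * nrm a * (2 * (x1 * x1)) < nrm a * nrm a * (x0 * x0) by nia.
rewrite ltr_pM2l //; nia.
Qed.

Lemma tp_sqD b d : tp d -> tp (zA (zM b b) d).
Proof.
case: b d => [b0 b1] [d0 d1] [/= h1 h2]; rewrite /tp /zA /zM /=.
set U := b0 * b0 + 2 * (b1 * b1); set u := b0 * b1 + b1 * b0.
have hU : 0 <= U by rewrite /U; nia.
have hUu : 2 * (u * u) <= U * U.
  have : U * U - 2 * (u * u) = (b0*b0 - 2*(b1*b1)) * (b0*b0 - 2*(b1*b1)) by rewrite /U /u; ring.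
  have := sq0 (b0*b0 - 2*(b1*b1)); lia.
have h3 : 4 * ((u * d1) * (u * d1)) <= (U * d0) * (U * d0).
  have: (2 * (u * u)) * (2 * (d1 * d1)) <= (U * U) * (d0 * d0).
    apply: ler_pM; try nia.
  nia.
have [h4 h5] := sq_le (mulr_ge0 hU (ltW h1)) h3.
split; first by nia.
nia.
Qed.

Lemma sq8 (x : int) : exists k, x * x = 8 * k \/ x * x = 8 * k + 1 \/ x * x = 8 * k + 4.
Proof.
have e := divz_eq x 4.
have h1 : 0 <= (x %% 4)%Z by apply: modz_ge0.
have h2 : (x %% 4)%Z < 4 by have := @ltz_mod x 4; rewrite /=; apply.
set q := (x %/ 4)%Z in e; set r := (x %% 4)%Z in e h1 h2.
have : r = 0 \/ r = 1 \/ r = 2 \/ r = 3 by lia.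
case=> [hr|[hr|[hr|hr]]]; rewrite e hr.
- exists (2 * (q * q)); left; ring.
- exists (2 * (q * q) + q); right; left; ring.
- exists (2 * (q * q) + 2 * q); right; right; ring.
- exists (2 * (q * q) + 3 * q + 1); right; left; ring.
Qed.

Lemma nrm_ne35 x : nrm x <> 3 /\ nrm x <> 5.
Proof.
case: x => x0 x1; rewrite /nrm /=.
have [k hk] := sq8 x0; have [l hl] := sq8 x1.
lia.
Qed.

Lemma round_ex (m n : int) : 0 < n -> exists k, - n <= 2 * (m - n * k) /\ 2 * (m - n * k) <= n.
Proof.
move=> hn.
have hd : (2 * n != 0) by lia.
have e := divz_eq (2 * m + n) (2 * n).
have h1 := modz_ge0 (2 * m + n) hd.
have h2 := ltz_mod (2 * m + n) hd.
exists ((2 * m + n) %/ (2 * n))%Z.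
move: e h1 h2; set q := ((2 * m + n) %/ (2 * n))%Z; set r := ((2 * m + n) %% (2 * n))%Z.
move=> e h1 h2.
have : `|2 * n| = 2 * n by rewrite ger0_norm //; lia.
move=> hh; rewrite hh in h2.
lia.
Qed.

Definition Inv (pi : zs) (e1 e2 : zt) (A B C D : zs) :=
  [/\ bil e1 e1 = zM pi A, bil e1 e2 = zM pi B, bil e2 e2 = zM pi C,
      zM A C = zA (zM B B) D & [/\ tp A, tp D & nrm D = 2]].
Definition Gl (pi : zs) := exists beta nu, bil beta beta = zM pi nu /\ tp nu /\
   (nrm nu = 1 \/ nrm nu = 2 \/ nrm nu = 4).

Lemma nrmC x : nrm (zC x) = nrm x.
Proof. case: x => x0 x1; rewrite /nrm /zC /=; ring. Qed.

Lemma tpY A D : tp A -> tp D -> tp (Yd A D).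
Proof. by move=> hA hD; apply: tpM => //; apply: tpM; apply: tpC. Qed.

Lemma nrmY A D : nrm (Yd A D) = nrm D * (nrm A * nrm A).
Proof. by rewrite /Yd !nrmM !nrmC. Qed.


Lemma bil_sc c e : bil (sc c e) (sc c e) = zM (zM c c) (bil e e).
Proof. by case: c e => [c0 c1] [[x0 x1] [y0 y1]]; zs_ring. Qed.
Lemma bil_scl c e f : bil (sc c e) f = zM c (bil e f).
Proof. by case: c e f => [c0 c1] [[x0 x1] [y0 y1]] [[u0 u1] [v0 v1]]; zs_ring. Qed.
Lemma bil_sub e f k : bil (ztsub e f k) (ztsub e f k) =
     zA (bil e e) (zA (zN (zM (2,0) (zM k (bil f e)))) (zM (zM k k) (bil f f))).
Proof. by case: e f k => [[x0 x1] [y0 y1]] [[u0 u1] [v0 v1]] [k0 k1]; zs_ring. Qed.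
Lemma bil_subl e f k : bil (ztsub e f k) f = zA (bil f e) (zN (zM k (bil f f))).
Proof. by case: e f k => [[x0 x1] [y0 y1]] [[u0 u1] [v0 v1]] [k0 k1]; zs_ring. Qed.
Lemma zMA x y z : zM (zM x y) z = zM x (zM y z).
Proof. by case: x y z => [x0 x1] [y0 y1] [z0 z1]; zs_ring. Qed.
Lemma zMC x y : zM x y = zM y x.
Proof. by case: x y => [x0 x1] [y0 y1]; zs_ring. Qed.
Lemma zMDr x y z : zM x (zA y z) = zA (zM x y) (zM x z).
Proof. by case: x y z => [x0 x1] [y0 y1] [z0 z1]; zs_ring. Qed.

Lemma zM_swap x y z : zM x (zM y z) = zM y (zM x z).
Proof. by case: x y z => [x0 x1] [y0 y1] [z0 z1]; zs_ring. Qed.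

Lemma inv_unit pi e1 e2 A B C D c : tp (zM c c) -> nrm (zM c c) = 1 ->
  Inv pi e1 e2 A B C D ->
  Inv pi (sc c e1) e2 (zM (zM c c) A) (zM c B) C (zM (zM c c) D).
Proof.
move=> hc hn [h1 h2 h3 h4 [h5 h6 h7]]; split.
- by rewrite bil_sc h1 zM_swap.
- by rewrite bil_scl h2 zM_swap.
- done.
- rewrite zMA h4 zMDr; congr zA.
  by case: (c) (B) => [c0 c1] [b0 b1]; zs_ring.
- split; [by apply: tpM | by apply: tpM | by rewrite nrmM hn h7; ring].
Qed.

Lemma inv_red pi e1 e2 A B C D k : Inv pi e1 e2 A B C D ->
  Inv pi (ztsub e2 e1 k) e1 (zA C (zA (zN (zM (2,0) (zM k B))) (zM (zM k k) A)))
      (zA B (zN (zM k A))) A D.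
Proof.
move=> [h1 h2 h3 h4 [h5 h6 h7]].
have e0 : forall (A C B k : zs), zM A (zA C (zA (zN (zM (2,0) (zM k B))) (zM (zM k k) A))) =
     zA (zM A C) (zA (zN (zM (2,0) (zM k (zM A B)))) (zM (zM k k) (zM A A))).
  by move=> [a0 a1] [c0 c1] [b0 b1] [k0 k1]; zs_ring.
have e1' : forall (A B D k : zs), zA (zA (zM B B) D) (zA (zN (zM (2,0) (zM k (zM A B)))) (zM (zM k k) (zM A A)))
   = zA (zM (zA B (zN (zM k A))) (zA B (zN (zM k A)))) D.
  by move=> [a0 a1] [b0 b1] [d0 d1] [k0 k1]; zs_ring.
have hAC1 : zM A (zA C (zA (zN (zM (2,0) (zM k B))) (zM (zM k k) A))) =
            zA (zM (zA B (zN (zM k A))) (zA B (zN (zM k A)))) D.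
  by rewrite e0 h4 e1'.
have e2' : forall (pi A B C k : zs), zA (zM pi C) (zA (zN (zM (2,0) (zM k (zM pi B)))) (zM (zM k k) (zM pi A)))
   = zM pi (zA C (zA (zN (zM (2,0) (zM k B))) (zM (zM k k) A))).
  by move=> [p0 p1] [a0 a1] [b0 b1] [c0 c1] [k0 k1]; zs_ring.
have e3 : forall (pi A B k : zs), zA (zM pi B) (zN (zM k (zM pi A))) = zM pi (zA B (zN (zM k A))).
  by move=> [p0 p1] [a0 a1] [b0 b1] [k0 k1]; zs_ring.
have e4 : forall (A C B k : zs), zM (zA C (zA (zN (zM (2,0) (zM k B))) (zM (zM k k) A))) A =
     zM A (zA C (zA (zN (zM (2,0) (zM k B))) (zM (zM k k) A))).
  by move=> X Y Z W; rewrite zMC.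
split.
- by rewrite bil_sub h3 h2 h1 e2'.
- by rewrite bil_subl h2 h1 e3.
- exact: h1.
- by rewrite e4 hAC1.
- split => //; apply: (tp_div h5); rewrite hAC1; exact: tp_sqD.
Qed.
Lemma key (n y0 y1 r0 r1 : int) : 6 <= n -> 0 < y0 -> y0 <= 2*n ->
  y0*y0 - 2*(y1*y1) = 2*(n*n) -> -n <= 2*r0 -> 2*r0 <= n -> -n <= 2*r1 -> 2* r1 <= n ->
  (r0*r0 - 2*(r1*r1))*(r0*r0 - 2*(r1*r1)) + 2*y0*(r0*r0+2*(r1*r1)) - 8*r0*r1*y1 + 2*(n*n) < n*n*(n*n).
Proof.
move=> hn hy0 hy0' hy h0 h0' h1 h1'.
have hy1: y1*y1 <= n*n.
  have : y0 * y0 <= 4*(n*n) by timeout 10 nia. timeout 10 lia.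
have hy1a: y1 <= n by timeout 10 nia.
have hy1b: -n <= y1 by timeout 10 nia.
have hS : 4*(r0*r0) <= n*n by timeout 10 nia.
have hR : 4*(r1*r1) <= n*n by timeout 10 nia.
have hS0 : 0 <= r0*r0 by timeout 10 nia.
have hR0 : 0 <= r1*r1 by timeout 10 nia.
have e1: 2*y0*(r0*r0+2*(r1*r1)) <= 4*n*(r0*r0+2*(r1*r1)).
  have: 0 <= (2*n - y0)*(r0*r0+2*(r1*r1)) by apply: mulr_ge0; lia.
  lia.
have e2: - 8*r0*r1*y1 <= 4*n*(r0*r0+r1*r1).
  have: 0 <= (n + y1) * ((r0+r1)*(r0+r1)) by apply: mulr_ge0; [lia | rewrite -expr2 sqr_ge0].
  have: 0 <= (n - y1) * ((r0-r1)*(r0-r1)) by apply: mulr_ge0; [lia | rewrite -expr2 sqr_ge0].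
  lia.
move: e1 e2 hS hR hS0 hR0.
set S := r0*r0; set R := r1*r1 => e1 e2 hS hR hS0 hR0.
have h4: 4*((S-2*R)*(S-2*R)) <= n*n*S + 4*(n*n)*R - 16*S*R.
  have: 0 <= S*(n*n-4*S) by apply: mulr_ge0; lia.
  have: 0 <= R*(n*n-4*R) by apply: mulr_ge0; lia.
  lia.
have hn2: 0 <= n*n by lia.
have [hK|hK] := lerP 0 (n*n+32*n-16*R).
  have: 4*S*(n*n+32*n-16*R) <= n*n*(n*n+32*n-16*R).
    have: 0 <= (n*n - 4*S)*(n*n+32*n-16*R) by apply: mulr_ge0; lia.
    lia.
  have: n * (4*R) <= n*(n*n) by apply: ler_wpM2l; lia.
  have: 90 * (n*n*n) <= 15*(n*n*n*n).
    have : 0 <= (n*n*n) * (n - 6) by apply: mulr_ge0; lia.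
    lia.
  have : 6 * (n*n) <= n*n*n.
    have : 0 <= (n*n) * (n - 6) by apply: mulr_ge0; lia.
    lia.
  lia.
have: S*(n*n+32*n-16*R) <= 0 by apply: mulr_ge0_le0; lia.
have: (4*R)*(n*n+12*n) <= n*n*(n*n+12*n) by apply: ler_wpM2r; lia.
have : 6 * (n*n) <= n*n*n.
  have : 0 <= (n*n) * (n - 6) by apply: mulr_ge0; lia.
  lia.
have : 6 * (n*n*n) <= n*n*n*n.
  have : 0 <= (n*n*n) * (n - 6) by apply: mulr_ge0; lia.
  lia.
lia.
Qed.

Lemma Ybal1 A D : (Yd (zM (zM (1,1) (1,1)) A) (zM (zM (1,1) (1,1)) D)).1 = 3 * (Yd A D).1 - 4 * (Yd A D).2.
Proof. case: A D => [a0 a1] [d0 d1]; rewrite /Yd /zM /zC /=; ring. Qed.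
Lemma Ybal2 A D : (Yd (zM (zM (-1,1) (-1,1)) A) (zM (zM (-1,1) (-1,1)) D)).1 = 3 * (Yd A D).1 + 4 * (Yd A D).2.
Proof. case: A D => [a0 a1] [d0 d1]; rewrite /Yd /zM /zC /=; ring. Qed.

Lemma red_id A B D k0 k1 :
  zM (zM (zC A) (zC A)) (zA (zM (zA B (zN (zM (k0, k1) A))) (zA B (zN (zM (k0, k1) A)))) D) =
  zA (zM ((zM B (zC A)).1 - nrm A * k0, (zM B (zC A)).2 - nrm A * k1)
         ((zM B (zC A)).1 - nrm A * k0, (zM B (zC A)).2 - nrm A * k1)) (Yd A D).
Proof. case: A B D => [a0 a1] [b0 b1] [d0 d1]; zs_ring. Qed.

Lemma nrm_exp r0 r1 y0 y1 : nrm (zA (zM (r0, r1) (r0, r1)) (y0, y1)) =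
  (r0*r0 - 2*(r1*r1))*(r0*r0 - 2*(r1*r1)) + 2*y0*(r0*r0+2*(r1*r1)) - 8*r0*r1*y1 + (y0*y0 - 2*(y1*y1)).
Proof. rewrite /nrm /zA /zM /=; ring. Qed.

Lemma lt_sq (a b : int) : 0 <= a -> 0 <= b -> a*a < b*b -> a < b.
Proof.
move=> ha hb h; case: (lerP b a) => // hba.
have: b * b <= a * a by apply: ler_pM.
lia.
Qed.

Lemma reduce pi : forall m k : nat, forall e1 e2 A B C D, Inv pi e1 e2 A B C D ->
  nrm A <= m%:Z -> (Yd A D).1 <= k%:Z -> Gl pi.
Proof.
elim=> [|m IHm] k e1 e2 A B C D hI hm hk.
  by case: hI => _ _ _ _ [/tp_nrm hA _ _]; lia.
elim: k e1 e2 A B C D hI hm hk => [|k IHk] e1 e2 A B C D hI hm hk.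
  case: (hI) => _ _ _ _ [hA hD _].
  by have [h _] := tpY hA hD; lia.
case: (hI) => h1 h2 h3 h4 [hA hD hDn].
have hn := tp_nrm hA.
have [hn3 hn5] := nrm_ne35 A.
case: (boolP ((nrm A == 1) || (nrm A == 2) || (nrm A == 4))) => hsmall.
  exists e1, A; split => //; split => //; lia.
have hn6 : 6 <= nrm A by lia.
have hY := tpY hA hD.
have hYn := nrmY A D.
move: hY hYn hk.
case E: (Yd A D) => [y0 y1] [/= hy0 hy1] hYn hk.
rewrite hDn {1}/nrm /= in hYn.
have hn0 : 0 < nrm A by lia.
case: (lerP y0 (2 * nrm A)) => hb.
-
  have [k0 [hk0 hk0']] := round_ex (zM B (zC A)).1 hn0.
  have [k1 [hk1 hk1']] := round_ex (zM B (zC A)).2 hn0.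
  have hI' := inv_red (k0, k1) hI.
  apply: (IHm (absz (Yd _ D).1) _ _ _ _ _ _ hI').
  2: by rewrite abszE; apply: ler_norm.
  case: (hI') => _ _ _ hAC [hC _ _].
  set C1 := zA C _ in hAC hC *.
  have e := red_id A B D k0 k1.
  rewrite -hAC E in e.
  have := congr1 nrm e.
  rewrite !nrmM nrmC nrm_exp hYn.
  have hkey := key hn6 hy0 hb hYn hk0 hk0' hk1 hk1'.
  move=> he.
  have hn3' : 0 < nrm A * nrm A * nrm A by apply: mulr_gt0 => //; apply: mulr_gt0.
  have : nrm A * nrm A * nrm A * nrm C1 < nrm A * nrm A * nrm A * nrm A by lia.
  rewrite ltr_pM2l //; lia.
-
  have hy1n : 4 * (nrm A * nrm A) < y0 * y0.
    have : 0 < (y0 - 2*nrm A) * (y0 + 2 * nrm A) by apply: mulr_gt0; lia.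
    lia.
  have hY4 : y0 * y0 < 4 * (y1 * y1) by lia.
  case: (lerP y1 0) => hys.
  + have hlt : y0 < - 2 * y1.
      apply: lt_sq; lia.
    have hc : tp (zM (-1,1) (-1,1)) by rewrite /tp /zM /=; lia.
    have hcn : nrm (zM (-1,1) (-1,1)) = 1 by rewrite /nrm /zM /=; lia.
    have hI'' := inv_unit hc hcn hI.
    apply: (IHk _ _ _ _ _ _ hI'').
      by rewrite nrmM hcn mul1r.
    by rewrite Ybal2 E /=; lia.
  + have hlt : y0 < 2 * y1.
      apply: lt_sq; lia.
    have hc : tp (zM (1,1) (1,1)) by rewrite /tp /zM /=; lia.
    have hcn : nrm (zM (1,1) (1,1)) = 1 by rewrite /nrm /zM /=; lia.
    have hI'' := inv_unit hc hcn hI.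
    apply: (IHk _ _ _ _ _ _ hI'').
      by rewrite nrmM hcn mul1r.
    by rewrite Ybal1 E /=; lia.
Qed.

Lemma even_sq (x : int) (t : int) : x * x = 2 * t -> exists h, x = 2 * h.
Proof.
move=> hx.
have e := divz_eq x 2.
have h1 : 0 <= (x %% 2)%Z by apply: modz_ge0.
have h2 : (x %% 2)%Z < 2 by have := @ltz_mod x 2; apply.
move: e h1 h2; set q := (x %/ 2)%Z; set r := (x %% 2)%Z => e h1 h2.
have : r = 0 \/ r = 1 by lia.
case=> hr; rewrite hr in e.
  by exists q; rewrite e; ring.
have : x * x = 2 * (2 * (q * q) + 2 * q) + 1 by rewrite e; ring.
lia.
Qed.

Lemma tp_dl : tp dl. Proof. rewrite /tp /dl /=; lia. Qed.
Lemma nrm_dl : nrm dl = 2. Proof. by rewrite /nrm /dl /=. Qed.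

Lemma halve nu t : tp nu -> nrm nu = 2 * t -> exists mu, nu = zM dl mu /\ tp mu /\ nrm mu = t.
Proof.
case: nu => n0 n1 hnu hn.
have [h e] : exists h, n0 = 2 * h.
  apply: (@even_sq _ (t + n1 * n1)); move: hn; rewrite /nrm /=; lia.
have E : (n0, n1) = zM dl (n0 + n1, h + n1) by rewrite /zM /dl /= e; congr (_,_); ring.
exists (n0 + n1, h + n1); split => //; split.
  by apply: (tp_div tp_dl); rewrite -E.
by move: hn; rewrite E nrmM nrm_dl; lia.
Qed.

Lemma zcancel X Z : zM dl X = zM dl Z -> X = Z.
Proof.
case: X Z => [x0 x1] [z0 z1]; rewrite /zM /dl /= => [[h1 h2]].
congr (_,_); lia.
Qed.

Lemma ddiv pi beta mu : bil beta beta = zM pi (zM dl mu) ->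
  exists beta', bil beta' beta' = zM pi mu.
Proof.
case: beta => [[x0 x1] [y0 y1]] hb.
have hp := congr1 fst hb.
have [h e] : exists h, x0 = 2 * h.
  move: hp; case: pi mu {hb} => [p0 p1] [m0 m1].
  rewrite /bil /zA /zM /dl /= => hp.
  apply: (@even_sq _ ((p0 * m0 + 2 * (p1 * m1)) - (p0 * m1 + p1 * m0) - x1 * x1
         - ((y0 * y0 + 2 * (y1 * y1)) - (y0 * y1 + y1 * y0)))).
  lia.
exists ((y0, y1), (- (x0 + x1), - (h + x1))).
apply: zcancel; rewrite zM_swap -hb.
rewrite /bil /zA /zM /dl /= e; congr (_,_); ring.
Qed.

Lemma unit_sq : forall k : nat, forall nu, tp nu -> nrm nu = 1 -> nu.1 <= k%:Z ->
  exists eps, nu = zM eps eps.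
Proof.
elim=> [|k IHk] [n0 n1] [/= h1 h2] hn hk; first by lia.
rewrite /nrm /= in hn.
case: (ltrgtP n1 0) => hn1.
- have hlt : n0 < - 2 * n1 by apply: lt_sq; lia.
  have ht : tp (zM (3,2) (n0,n1)) by apply: tpM => //; rewrite /tp /=; lia.
  have hn' : nrm (zM (3,2) (n0, n1)) = 1 by rewrite nrmM /nrm /=; lia.
  have hk' : (zM (3,2) (n0, n1)).1 <= k%:Z by rewrite /zM /=; lia.
  have [e He] := IHk _ ht hn' hk'.
  exists (zM (-1,1) e).
  have -> : (n0, n1) = zM (3,-2) (zM (3,2) (n0,n1)) by rewrite /zM /=; congr (_,_); ring.
  rewrite He; case: e {He} => e0 e1; zs_ring.
- have hlt : n0 < 2 * n1 by apply: lt_sq; lia.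
  have ht : tp (zM (3,-2) (n0,n1)) by apply: tpM => //; rewrite /tp /=; lia.
  have hn' : nrm (zM (3,-2) (n0, n1)) = 1 by rewrite nrmM /nrm /=; lia.
  have hk' : (zM (3,-2) (n0, n1)).1 <= k%:Z by rewrite /zM /=; lia.
  have [e He] := IHk _ ht hn' hk'.
  exists (zM (1,1) e).
  have -> : (n0, n1) = zM (3,2) (zM (3,-2) (n0,n1)) by rewrite /zM /=; congr (_,_); ring.
  rewrite He; case: e {He} => e0 e1; zs_ring.
- exists (1, 0); rewrite hn1 in hn *; rewrite /zM /=.
  have : n0 = 1 by nia.
  by move=> ->; congr (_,_).
Qed.

Lemma unit_id e p : zM (zM (zC e) (zC e)) (zM p (zM e e)) = zM p (nrm e * nrm e, 0).
Proof. case: e p => [e0 e1] [p0 p1]; zs_ring. Qed.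

Lemma final pi : Gl pi -> exists alpha, bil alpha alpha = pi.
Proof.
have fin1 : forall beta nu, bil beta beta = zM pi nu -> tp nu -> nrm nu = 1 ->
    exists alpha, bil alpha alpha = pi.
  move=> beta nu hb ht hn.
  have hk : nu.1 <= (absz nu.1)%:Z by rewrite abszE; apply: ler_norm.
  have [e He] := unit_sq ht hn hk.
  exists (sc (zC e) beta).
  rewrite bil_sc hb He unit_id -nrmM -He hn.
  by case: (pi) => p0 p1; rewrite /zM /=; congr (_,_); ring.
move=> [beta [nu [hb [ht hn]]]].
case: hn => [hn|[hn|hn]].
- exact: fin1 hb ht hn.
- have hn2 : nrm nu = 2 * 1 by rewrite hn.
  have [mu [E [hm hmn]]] := halve ht hn2.
  rewrite E in hb; have [b' hb'] := ddiv hb.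
  exact: fin1 hb' hm hmn.
- have hn2 : nrm nu = 2 * 2 by rewrite hn.
  have [mu [E [hm hmn]]] := halve ht hn2.
  have hn3 : nrm mu = 2 * 1 by rewrite hmn.
  have [mu' [E' [hm' hmn']]] := halve hm hn3.
  rewrite E E' in hb; have [b' hb'] := ddiv hb.
  have [b'' hb''] := ddiv hb'.
  exact: fin1 hb'' hm' hmn'.
Qed.

Lemma start pi r C : tp pi -> zM pi C = (r * r + 2, -1) -> exists alpha, bil alpha alpha = pi.
Proof.
move=> hp hC; apply: final.
have hI : Inv pi (pi, (0,0)) ((-r, 0), (1,0)) pi (-r, 0) C dl.
  split.
  - by case: pi {hp hC} => p0 p1; zs_ring.
  - by case: pi {hp hC} => p0 p1; zs_ring.
  - by rewrite hC; zs_ring.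
  - by rewrite hC; zs_ring.
  - by split; [done | exact: tp_dl | exact: nrm_dl].
apply: (@reduce pi (absz (nrm pi)) (absz (Yd pi dl).1) _ _ _ _ _ _ hI); rewrite abszE; apply: ler_norm.
Qed.
Lemma natr_inj_p (F : fieldType) (p : nat) (pF : p \in [pchar F]) (i j : nat) :
  (i < p)%N -> (j < p)%N -> i%:R = j%:R :> F -> i = j.
Proof.
wlog hij : i j / (i <= j)%N.
  move=> H hi hj e; case: (leqP i j) => h; first exact: H.
  by symmetry; apply: H => //; apply: ltnW.
move=> hi hj e.
have : ((j - i)%:R == 0 :> F) by rewrite natrB // e subrr.
rewrite -(dvdn_pcharf pF) => hd.
have : (j - i < p)%N by apply: leq_ltn_trans hj; apply: leq_subr.
case: (j - i)%N hd (subnK hij) => [|d] hd hk hlt.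
  by rewrite add0n in hk.
by have := dvdn_leq (ltn0Sn d) hd; rewrite leqNgt hlt.
Qed.

Lemma frob_fixed (F : fieldType) (p : nat) (pF : p \in [pchar F]) (t : F) :
  t ^+ p = t -> exists r : nat, t = r%:R.
Proof.
move=> ht.
have pp := pcharf_prime pF.
have p2 := prime_gt1 pp.
pose rs := [seq i%:R | i <- iota 0 p] : seq F.
have Urs : uniq rs.
  rewrite map_inj_in_uniq ?iota_uniq // => i j; rewrite !mem_iota !add0n => /andP[_ hi] /andP[_ hj].
  move=> e; exact: (natr_inj_p pF hi hj e).
case: (boolP (t \in rs)) => [/mapP[i _ ->]|tn]; first by exists i.
exfalso.
pose q : {poly F} := 'X^p - 'X.
have sq : size q = p.+1.
  by rewrite /q size_polyDl size_polyXn // size_polyN size_polyX.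
have q0 : q != 0 by rewrite -size_poly_eq0 sq.
have Rrs : all (root q) (t :: rs).
  apply/allP => x; rewrite inE => /orP[/eqP ->|/mapP[i _ ->]].
    by rewrite /root /q !hornerE ht subrr.
  by rewrite /root /q !hornerE -(pFrobenius_autE pF) pFrobenius_aut_nat subrr.
have U : uniq (t :: rs) by rewrite /= tn Urs.
have := max_poly_roots q0 Rrs U; rewrite sq /= size_map size_iota.
by rewrite ltnn.
Qed.

Lemma ff_root (p a b : nat) : prime p -> (p %% 16 = 7)%N -> (a * a = p + 2 * (b * b))%N ->
  exists r : nat, (p %| (r*r+2)*(r*r+2) - 2)%N /\ (p %| a + b*(r*r+2))%N.
Proof.
move=> pp p16 hab.
have [F pF cF] := pPrimePowerField pp (isT : (0 < 2)%N).
set q := (p %/ 16)%N.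
have ep : p = (16 * q + 7)%N by rewrite {1}(divn_eq p 16) p16 mulnC.
set M := (16 * q * q + 14 * q + 3)%N.
have eN : (#|F|.-1 = 16 * M)%N by rewrite cF ep /M; lia.
have M0 : (0 < M)%N by rewrite /M; lia.
pose rs := enum (predC1 (0 : F)).
have all1 : all (#|F|.-1).-unity_root rs.
  apply/allP => x; rewrite mem_enum /= => x0.
  rewrite unity_rootE; apply/eqP.
  have h := expf_card x.
  have e : #|F| = (#|F|.-1).+1 by rewrite prednK // cF expn_gt0 prime_gt0.
  rewrite e in h.
  by apply: (mulfI x0); rewrite -exprS h mulr1.
have Urs : uniq rs by apply: enum_uniq.
have szrs : (#|F|.-1 <= size rs)%N by rewrite -cardE cardC1.
have N0 : (0 < #|F|.-1)%N by rewrite eN; lia.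
have [g _ gprim] := hasP (has_prim_root N0 all1 Urs szrs).
set z := g ^+ M.
have z16 : z ^+ 16 = 1 by rewrite /z -exprM mulnC -eN prim_expr_order.
have z8 : z ^+ 8 = -1.
  have : (z ^+ 8) ^+ 2 == 1 by rewrite -exprM z16.
  rewrite sqrf_eq1 => /orP[|/eqP //].
  rewrite /z -exprM -(prim_order_dvd gprim) eN.
  move=> hd; have h8 : (0 < M * 8)%N by lia.
  have := dvdn_leq h8 hd; lia.
have zr : forall k, z ^+ (k + 8) = - z ^+ k by move=> k; rewrite exprD z8 mulrN1.
have zm : forall k j, z ^+ (16 * k + j) = z ^+ j.
  by move=> k j; rewrite exprD exprM [z ^+ 16]z16 expr1n mul1r.
have frobD : forall x y : F, (x + y) ^+ p = x ^+ p + y ^+ p.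
  move=> x y; rewrite -!(pFrobenius_autE pF) pFrobenius_autD_comm //; exact: mulrC.
have zp : forall j, (z ^+ j) ^+ p = z ^+ (j * p) by move=> j; rewrite -exprM.
pose t1 := z + z ^+ 7.
pose t3 := z ^+ 3 + z ^+ 5.
have ht1 : t1 ^+ p = t1.
  rewrite /t1 frobD -{1}(expr1 z) !zp ep.
  rewrite (_ : (1 * (16 * q + 7))%N = 16 * q + 7)%N; last by lia.
  rewrite (_ : (7 * (16 * q + 7))%N = 16 * (7 * q + 3) + 1)%N; last by lia.
  by rewrite !zm expr1 addrC.
have ht3 : t3 ^+ p = t3.
  rewrite /t3 frobD !zp ep.
  rewrite (_ : (3 * (16 * q + 7))%N = 16 * (3 * q + 1) + 5)%N; last by lia.
  rewrite (_ : (5 * (16 * q + 7))%N = 16 * (5 * q + 2) + 3)%N; last by lia.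
  by rewrite !zm addrC.
have es1 : t1 ^+ 2 + 2 = z ^+ 2 - z ^+ 6.
  have -> : t1 ^+ 2 + 2 = z ^+ 2 + 2 * z ^+ (0 + 8) + z ^+ (6 + 8) + 2 by rewrite /t1; ring.
  rewrite !zr expr0; ring.
have es3 : t3 ^+ 2 + 2 = - (z ^+ 2 - z ^+ 6).
  have -> : t3 ^+ 2 + 2 = z ^+ 6 + 2 * z ^+ (0 + 8) + z ^+ (2 + 8) + 2 by rewrite /t3; ring.
  rewrite !zr expr0; ring.
have es2 : (z ^+ 2 - z ^+ 6) ^+ 2 = 2.
  have -> : (z ^+ 2 - z ^+ 6) ^+ 2 = z ^+ 4 - 2 * z ^+ (0 + 8) + z ^+ (4 + 8) by ring.
  rewrite !zr expr0; ring.
set s := z ^+ 2 - z ^+ 6 in es1 es3 es2.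
have hab' : (a%:R : F) ^+ 2 = 2 * (b%:R) ^+ 2.
  have := congr1 (fun n => n%:R : F) hab; rewrite /= natrD (pcharf0 pF) add0r !natrM.
  by rewrite !expr2 => ->.
have [t [htp ht2 ht]] : exists t : F, [/\ t ^+ p = t, (t ^+ 2 + 2) ^+ 2 = 2 & a%:R + b%:R * (t ^+ 2 + 2) = 0].
  have : (a%:R + b%:R * s) * (a%:R - b%:R * s) = 0 :> F.
    have -> : (a%:R + b%:R * s) * (a%:R - b%:R * s) = (a%:R : F) ^+ 2 - (b%:R) ^+ 2 * s ^+ 2 :> F by ring.
    by rewrite es2 hab'; ring.
  move/eqP; rewrite mulf_eq0 => /orP[/eqP h|/eqP h].
    by exists t1; split => //; rewrite es1.
  exists t3; split => //; first by rewrite es3 sqrrN.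
  by rewrite es3 mulrN.
have [r er] := frob_fixed pF htp.
exists r; rewrite !(dvdn_pcharf pF).
rewrite er in ht2 ht.
split.
  have le2 : (2 <= (r*r+2)*(r*r+2))%N by nia.
  rewrite natrB //.
  by rewrite !(natrD, natrM) -expr2 ht2 subrr.
by rewrite !(natrD, natrM) -expr2 ht.
Qed.
Lemma z8 : zeta16 ^+ 8 = -1.
Proof. by rewrite /zeta16 rootCK. Qed.

Lemma zred (k j n : nat) : n = (16 * k + j)%N -> zeta16 ^+ n = zeta16 ^+ j.
Proof.
move=> ->; rewrite exprD exprM (_ : zeta16 ^+ 16 = 1) ?expr1n ?mul1r //.
by rewrite (_ : 16 = 8 * 2)%N // exprM z8 expr2 mulrNN mulr1.
Qed.

Lemma zredN (k j n : nat) : n = (16 * k + 8 + j)%N -> zeta16 ^+ n = - zeta16 ^+ j.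
Proof.
by move=> ->; rewrite -addnA (@zred k (8 + j)) // exprD z8 mulN1r.
Qed.

Lemma sqrt2E : sqrt2 = zeta16 ^+ 2 - zeta16 ^+ 6.
Proof. by rewrite /sqrt2 (@zredN 0 6 14). Qed.

Lemma s2 : sqrt2 ^+ 2 = 2.
Proof.
rewrite sqrt2E.
have -> : (zeta16 ^+ 2 - zeta16 ^+ 6) ^+ 2 = zeta16 ^+ 4 - 2 * zeta16 ^+ 8 + zeta16 ^+ 12 by ring.
rewrite z8 (@zredN 0 4 12) //; ring.
Qed.

Lemma thE : theta16 ^+ 2 = sqrt2 - 2.
Proof.
rewrite sqrt2E /theta16.
have -> : (zeta16 + zeta16 ^+ 7) ^+ 2 = zeta16 ^+ 2 + 2 * zeta16 ^+ 8 + zeta16 ^+ 14 by ring.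
rewrite z8 (@zredN 0 6 14) //; ring.
Qed.

Definition theta3 : algC := zeta16 ^+ 3 + zeta16 ^+ 5.

Lemma th3E : theta3 ^+ 2 = - sqrt2 - 2.
Proof.
rewrite sqrt2E /theta3.
have -> : (zeta16 ^+ 3 + zeta16 ^+ 5) ^+ 2 = zeta16 ^+ 6 + 2 * zeta16 ^+ 8 + zeta16 ^+ 10 by ring.
rewrite z8 (@zredN 0 2 10) //; ring.
Qed.

Lemma sig_pow i u k : is_sigma i u -> u (zeta16 ^+ k) = zeta16 ^+ (i * k).
Proof. by move=> hu; rewrite rmorphXn /= hu -exprM. Qed.

Lemma sig_s2 i u : is_sigma i u -> u sqrt2 = zeta16 ^+ (i * 2) + zeta16 ^+ (i * 14).
Proof. by move=> hu; rewrite /sqrt2 rmorphD /= !(sig_pow _ hu). Qed.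

Lemma sig_th i u : is_sigma i u -> u theta16 = zeta16 ^+ (i * 1) + zeta16 ^+ (i * 7).
Proof. by move=> hu; rewrite /theta16 rmorphD /= -{1}(expr1 zeta16) !(sig_pow _ hu). Qed.

Lemma sig1 u : is_sigma 1 u -> u sqrt2 = sqrt2 /\ u theta16 = theta16.
Proof. by move=> hu; rewrite (sig_s2 hu) (sig_th hu) !mul1n expr1. Qed.

Lemma sig15 u : is_sigma 15 u -> u sqrt2 = sqrt2 /\ u theta16 = - theta16.
Proof.
move=> hu; rewrite (sig_s2 hu) (sig_th hu) /sqrt2 /theta16.
rewrite (@zred 1 14 (15 * 2)) // (@zred 13 2 (15 * 14)) //.
rewrite (@zredN 0 7 (15 * 1)) // (@zred 6 9 (15 * 7)) // (@zredN 0 1 9) // expr1.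
split; ring.
Qed.

Lemma sig7 u : is_sigma 7 u -> u sqrt2 = sqrt2 /\ u theta16 = theta16.
Proof.
move=> hu; rewrite (sig_s2 hu) (sig_th hu) /sqrt2 /theta16.
rewrite (@zred 0 14 (7 * 2)) // (@zred 6 2 (7 * 14)) //.
rewrite (@zred 0 7 (7 * 1)) // (@zred 3 1 (7 * 7)) // expr1.
split; ring.
Qed.

Lemma sig9 u : is_sigma 9 u -> u sqrt2 = sqrt2 /\ u theta16 = - theta16.
Proof.
move=> hu; rewrite (sig_s2 hu) (sig_th hu) /sqrt2 /theta16.
rewrite (@zred 1 2 (9 * 2)) // (@zred 7 14 (9 * 14)) //.
rewrite (@zredN 0 1 (9 * 1)) // (@zredN 3 7 (9 * 7)) // expr1.
split; ring.
Qed.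

Lemma sig3 u : is_sigma 3 u -> u sqrt2 = - sqrt2 /\ u theta16 = theta3.
Proof.
move=> hu; rewrite (sig_s2 hu) (sig_th hu) sqrt2E /theta3.
rewrite (@zred 0 6 (3 * 2)) // (@zredN 2 2 (3 * 14)) //.
rewrite (@zred 0 3 (3 * 1)) // (@zred 1 5 (3 * 7)) //.
split; ring.
Qed.

Lemma sig5 u : is_sigma 5 u -> u sqrt2 = - sqrt2 /\ u theta16 = theta3.
Proof.
move=> hu; rewrite (sig_s2 hu) (sig_th hu) sqrt2E /theta3.
rewrite (@zredN 0 2 (5 * 2)) // (@zred 4 6 (5 * 14)) //.
rewrite (@zred 0 5 (5 * 1)) // (@zred 2 3 (5 * 7)) //.
split; ring.
Qed.

Lemma sig13 u : is_sigma 13 u -> u sqrt2 = - sqrt2 /\ u theta16 = - theta3.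
Proof.
move=> hu; rewrite (sig_s2 hu) (sig_th hu) sqrt2E /theta3.
rewrite (@zredN 1 2 (13 * 2)) // (@zred 11 6 (13 * 14)) //.
rewrite (@zredN 0 5 (13 * 1)) // (@zredN 5 3 (13 * 7)) //.
split; ring.
Qed.

Lemma sig11 u : is_sigma 11 u -> u sqrt2 = - sqrt2 /\ u theta16 = - theta3.
Proof.
move=> hu; rewrite (sig_s2 hu) (sig_th hu) sqrt2E /theta3.
rewrite (@zred 1 6 (11 * 2)) // (@zredN 9 2 (11 * 14)) //.
rewrite (@zredN 0 3 (11 * 1)) // (@zredN 4 5 (11 * 7)) //.
split; ring.
Qed.

Definition phi (s : algC) (z : zs) : algC := z.1%:~R + z.2%:~R * s.

Lemma phiA s x y : phi s (zA x y) = phi s x + phi s y.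
Proof. by rewrite /phi /zA /= !rmorphD /=; ring. Qed.

Lemma phiM s x y : s ^+ 2 = 2 -> phi s (zM x y) = phi s x * phi s y.
Proof.
move=> hs; rewrite /phi /zM /= !(rmorphD, rmorphM) /=.
have e : forall A B C D : algC, (A + B * s) * (C + D * s) = A * C + 2 * (B * D) + (A * D + B * C) * s + B * D * (s ^+ 2 - 2).
  by move=> A B C D; ring.
by rewrite e hs subrr mulr0 addr0.
Qed.

Lemma prod_id s w x y : s ^+ 2 = 2 -> w ^+ 2 = s - 2 ->
  (phi s x + phi s y * w) * (phi s x - phi s y * w) = phi s (bil (x, y) (x, y)).
Proof.
move=> hs hw; rewrite /bil /= phiA !phiM //.
have -> : phi s dl = 2 - s.
  by rewrite /phi /dl /= mulN1r.
have e : (phi s x + phi s y * w) * (phi s x - phi s y * w) = phi s x * phi s x - phi s y * phi s y * w ^+ 2 by ring.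
by rewrite e hw; ring.
Qed.

Lemma sig_phi (u : {rmorphism algC -> algC}) x : u (phi sqrt2 x) = phi (u sqrt2) x.
Proof. by rewrite /phi rmorphD rmorphM /= !rmorph_int. Qed.

Lemma zpi_C (p a b S u v : int) : p != 0 -> a * a - 2 * (b * b) = p ->
  a + b * S = u * p -> S * S - 2 = v * p ->
  zM (a, b) (S * u - b * v, - u) = (S, -1).
Proof.
move=> hp hab hu hv; rewrite /zM /=; congr (_, _); apply: (mulfI hp).
- have -> : p * (a * (S * u - b * v) + 2 * (b * - u)) =
     a * S * (u * p) - a * b * (v * p) - 2 * b * (u * p) by ring.
  by rewrite -hu -hv -hab; ring.
- have -> : p * (a * - u + b * (S * u - b * v)) =
     - a * (u * p) + b * S * (u * p) - b * b * (v * p) by ring.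
  by rewrite -hu -hv -hab; ring.
Qed.

Unset Implicit Arguments. Set Strict Implicit.

Theorem lemma5 (p a b : nat) :
  prime p -> (p %% 16 = 7)%N -> (0 < a)%N -> (0 < b)%N ->
  (p%:R : algC) = (a%:R + b%:R * sqrt2) * (a%:R - b%:R * sqrt2) ->
  exists alpha : algC, in_Ztheta alpha /\
    forall s1 s3 s5 s7 s9 s11 s13 s15 : {rmorphism algC -> algC},
      is_sigma 1 s1 -> is_sigma 3 s3 -> is_sigma 5 s5 -> is_sigma 7 s7 ->
      is_sigma 9 s9 -> is_sigma 11 s11 -> is_sigma 13 s13 -> is_sigma 15 s15 ->
      [/\ a%:R + b%:R * sqrt2 = s1 alpha * s15 alpha,
          a%:R + b%:R * sqrt2 = s7 alpha * s9 alpha,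
          a%:R - b%:R * sqrt2 = s3 alpha * s13 alpha &
          a%:R - b%:R * sqrt2 = s5 alpha * s11 alpha].
Proof.
move=> pp p16 a0 b0 H.
have hab : (a * a = p + 2 * (b * b))%N.
  apply/eqP; rewrite -(eqr_nat algC) natrD !natrM H.
  have e : ((a%:R + b%:R * sqrt2) * (a%:R - b%:R * sqrt2) : algC) = a%:R * a%:R - b%:R * b%:R * sqrt2 ^+ 2 by ring.
  by rewrite e s2; apply/eqP; ring.
have [r [hd1 hd2]] := ff_root pp p16 hab.
case/dvdnP: hd1 => v hv.
case/dvdnP: hd2 => u hu.
have p0 : (0 < p)%N by apply: prime_gt0.
have hC := @zpi_C p a b (r * r + 2)%N u v.
have hC' : zM (a%:Z, b%:Z) ((r*r+2)%:Z * u%:Z - b%:Z * v%:Z, - u%:Z) = (r%:Z * r%:Z + 2, -1).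
  have c1 : (p%:Z != 0) by lia.
  have c2 : a%:Z * a%:Z - 2 * (b%:Z * b%:Z) = p%:Z by lia.
  have c3 : a%:Z + b%:Z * (r * r + 2)%N%:Z = u%:Z * p%:Z by lia.
  have c4' : ((r * r + 2) * (r * r + 2) = v * p + 2)%N by lia.
  have c4 : (r * r + 2)%N%:Z * (r * r + 2)%N%:Z - 2 = v%:Z * p%:Z by lia.
  rewrite (hC c1 c2 c3 c4); congr (_, _); lia.
have htp : tp (a%:Z, b%:Z) by rewrite /tp /=; lia.
have [[x y] hxy] := start htp hC'.
set alpha := phi sqrt2 x + phi sqrt2 y * theta16.
exists alpha; split.
  exists ((x.1 + 2 * x.2)%:P + (y.1 + 2 * y.2)%:P * 'X + x.2%:P * 'X^2 + y.2%:P * 'X^3).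
  rewrite !(rmorphD, rmorphM, map_polyC, map_polyX) /= !hornerE /alpha /phi.
  have -> : sqrt2 = theta16 ^+ 2 + 2 by rewrite thE; ring.
  rewrite ?rmorphD ?rmorphM /=.
  rewrite !map_polyC !map_polyX !hornerC !hornerX ?rmorph1.
  ring.
move=> s1 s3 s5 s7 s9 s11 s13 s15 h1 h3 h5 h7 h9 h11 h13 h15.
have hpi : forall s, phi s (a%:Z, b%:Z) = a%:R + b%:R * s by move=> s; rewrite /phi.
have Hp : a%:R + b%:R * sqrt2 = phi sqrt2 (bil (x, y) (x, y)) by rewrite hxy hpi.
have Hm : a%:R - b%:R * sqrt2 = phi (- sqrt2) (bil (x, y) (x, y)) by rewrite hxy hpi mulrN.
have s2' : (- sqrt2) ^+ 2 = 2 by rewrite sqrrN s2.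
have th3' : theta3 ^+ 2 = - sqrt2 - 2 by exact: th3E.
have ua : forall (w : {rmorphism algC -> algC}), w alpha = phi (w sqrt2) x + phi (w sqrt2) y * w theta16.
  by move=> w; rewrite /alpha rmorphD rmorphM /= !sig_phi.
rewrite !ua.
have [e1 f1] := sig1 h1; have [e3 f3] := sig3 h3; have [e5 f5] := sig5 h5.
have [e7 f7] := sig7 h7; have [e9 f9] := sig9 h9; have [e11 f11] := sig11 h11.
have [e13 f13] := sig13 h13; have [e15 f15] := sig15 h15.
rewrite e1 f1 e3 f3 e5 f5 e7 f7 e9 f9 e11 f11 e13 f13 e15 f15 !mulrN.
split.
- by rewrite Hp (prod_id _ _ s2 thE).
- by rewrite Hp (prod_id _ _ s2 thE).
- by rewrite Hm (prod_id _ _ s2' th3').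
- by rewrite Hm (prod_id _ _ s2' th3').
Qed.
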